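(* Let $x,y\in\mathbb{R}^d$ with $\lVert x\rVert=\lVert y\rVert=1$, and let $\epsilon\in\mathbb{R}$ with $\lVert x-y\rVert\le\epsilon$. Then for every $c\in\{0,\dots,k-1\}$, $$\lvert P(\hat c_y=c)-P(\hat c_x=c)\rvert\le d\,(\epsilon^2+2\epsilon).$$
   Context: Setting. We use the following notation. - $D\ge 0$ and $K\ge 0$ are integers. Put $d=2^D$, $k'=2^K$ and $n=2^{D+K}$. The number of classes $k$ satisfies $1\le k\le k'$. - $U\in\mathbb{C}^{n\times n}$ is a fixed unitary matrix, and $\lVert\cdot\rVert$ is the Euclidean norm. - All indices start at $0$. - For a unit vector $x\in\mathbb{R}^d$, let $v=U(x\otimes e_0)$, where $e_0\in\mathbb{C}^{k'}$ is the first standard basis vector. Thus $(x\otimes e_0)_{k's}=x_s$ and all other entries of $x\otimes e_0$ are $0$. - For $c\in\{0,\dots,k-1\}$, define $P(\hat c_x=c)=\sum_{t=0}^{d-1}\lvert v_{k't+c}\rvert^2$, and likewise for $y$. *)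

(* Defs.v *)
(* R : rcfType (generalizes the real numbers), C = R[i]. *)
From HB Require Import structures.
From mathcomp Require Import all_boot all_order all_algebra.
From mathcomp Require Import complex.
Set Implicit Arguments. Unset Strict Implicit. Unset Printing Implicit Defensive.
Import Order.TTheory GRing.Theory Num.Theory.
Local Open Scope ring_scope.

Definition cnorm2 (R : rcfType) (z : R[i]) : R := (complex.Re z) ^+ 2 + (complex.Im z) ^+ 2.

Definition vnorm (R : rcfType) (d : nat) (x : 'cV[R]_d) : R :=
  Num.sqrt (\sum_(s < d) x s 0 ^+ 2).

Definition adjmx (R : rcfType) (m n : nat) (A : 'M[R[i]]_(m, n)) : 'M[R[i]]_(n, m) :=
  (map_mx (@conjc R) A)^T.

Definition unitary (R : rcfType) (n : nat) (U : 'M[R[i]]_n) : Prop :=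
  adjmx U *m U = 1%:M.

(* x (x) e_0 in C^(d*k'), with (x (x) e_0)_(k' s) = x_s, all other entries 0 *)
Definition tens_e0 (R : rcfType) (D K : nat) (x : 'cV[R]_(2 ^ D)) : 'cV[R[i]]_(2 ^ (D + K)) :=
  \col_(i < 2 ^ (D + K))
     \sum_(s < 2 ^ D) (if val i == (2 ^ K * s)%N then (x s 0)%:C else 0)%C.

Definition state (R : rcfType) (D K : nat) (U : 'M[R[i]]_(2 ^ (D + K)))
  (x : 'cV[R]_(2 ^ D)) : 'cV[R[i]]_(2 ^ (D + K)) := U *m tens_e0 K x.

(* P(c_hat_x = c) = sum_{t < d} |v_(k' t + c)|^2 *)
Definition Pclass (R : rcfType) (D K : nat) (U : 'M[R[i]]_(2 ^ (D + K)))
  (x : 'cV[R]_(2 ^ D)) (c : nat) : R :=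
  \sum_(t < 2 ^ D) \sum_(j < 2 ^ (D + K) | val j == (2 ^ K * t + c)%N)
     cnorm2 (state U x j 0).

(* Main.v *)
Require Import Defs.
From HB Require Import structures.
From mathcomp Require Import all_boot all_order all_algebra.
From mathcomp Require Import complex.
From mathcomp Require Import ring lra.
Import Order.TTheory GRing.Theory Num.Theory.
Local Open Scope ring_scope.

Lemma cn_conj (R : rcfType) (z : R[i]) : complex.Re (conjc z * z) = cnorm2 z.
Proof. case: z => a b; rewrite /cnorm2 /=. ring. Qed.

Lemma cn_add (R : rcfType) (a e : R[i]) :
  cnorm2 (a + e) = cnorm2 a + 2 * (complex.Re a * complex.Re e + complex.Im a * complex.Im e) + cnorm2 e.
Proof. case: a => a1 a2; case: e => e1 e2; rewrite /cnorm2 /=. ring. Qed.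

Lemma ipE (R : rcfType) n (z : 'cV[R[i]]_n) :
  complex.Re ((adjmx z *m z) 0 0) = \sum_(j < n) cnorm2 (z j 0).
Proof.
rewrite !mxE raddf_sum; apply: eq_bigr => j _.
by rewrite !mxE; apply: cn_conj.
Qed.

Lemma isom (R : rcfType) n (U : 'M[R[i]]_n) (z : 'cV[R[i]]_n) : unitary U ->
  \sum_(j < n) cnorm2 ((U *m z) j 0) = \sum_(j < n) cnorm2 (z j 0).
Proof.
move=> hU.
have key : adjmx (U *m z) *m (U *m z) = adjmx z *m z.
  rewrite /adjmx map_mxM trmx_mul -mulmxA (mulmxA _ U) -/(adjmx U) hU mul1mx //.
by rewrite -!ipE key.
Qed.

Lemma sum_uniq (V : zmodType) m (P : pred 'I_m) (F : 'I_m -> V) :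
  (forall s t, P s -> P t -> s = t) ->
  \sum_(s < m) (if P s then F s else 0) =
  match [pick s | P s] with Some s => F s | None => 0 end.
Proof.
move=> H; case: pickP => [s0 Ps0 | h].
  rewrite (bigD1 s0) //= Ps0 big1 ?addr0 // => s hs; case: ifP => // Ps.
  by rewrite (H _ _ Ps Ps0) eqxx in hs.
by apply: big1 => s _; rewrite h.
Qed.

Lemma tens_norm (R : rcfType) (D K : nat) (a : 'cV[R]_(2 ^ D)) :
  \sum_(j < 2 ^ (D + K)) cnorm2 (tens_e0 K a j 0) = \sum_(s < 2 ^ D) a s 0 ^+ 2.
Proof.
have inj : forall j : 'I_(2 ^ (D + K)), forall s t : 'I_(2 ^ D),
    (val j == 2 ^ K * s)%N -> (val j == 2 ^ K * t)%N -> s = t.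
  move=> j s t /eqP hs /eqP ht; apply: val_inj => /=.
  apply/eqP; rewrite -(eqn_pmul2l (expn_gt0 2 K)) -hs -ht //.
have step : forall j : 'I_(2 ^ (D + K)), cnorm2 (tens_e0 K a j 0) =
    \sum_(s < 2 ^ D) (if (val j == 2 ^ K * s)%N then a s 0 ^+ 2 else 0).
  move=> j; rewrite mxE (@sum_uniq _ _ (fun s : 'I_(2 ^ D) => (val j == 2 ^ K * s)%N)); last exact: inj.
  rewrite (@sum_uniq _ _ (fun s : 'I_(2 ^ D) => (val j == 2 ^ K * s)%N)); last exact: inj.
  destruct pick as [s|]; rewrite /cnorm2 /=; first by rewrite expr0n /= addr0.
  by rewrite expr0n addr0.
under eq_bigr do rewrite step.
rewrite exchange_big /=; apply: eq_bigr => s _.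
rewrite (@sum_uniq _ _ (fun j : 'I_(2 ^ (D + K)) => (val j == 2 ^ K * s)%N)); last first.
  by move=> i j /eqP hi /eqP hj; apply: val_inj; rewrite /= hi hj.
case: pickP => // h.
have lt : (2 ^ K * s < 2 ^ (D + K))%N.
  by rewrite expnD mulnC ltn_pmul2r ?expn_gt0.
by have := h (Ordinal lt); rewrite /= eqxx.
Qed.

Lemma tensB (R : rcfType) (D K : nat) (a b : 'cV[R]_(2 ^ D)) :
  tens_e0 K (a - b) = tens_e0 K a - tens_e0 K b.
Proof.
apply/matrixP => i j; rewrite !mxE -sumrB; apply: eq_bigr => s _.
case: ifP => _; last by rewrite subr0.
by rewrite !mxE raddfD raddfN.
Qed.

Lemma le_sum1 (R : rcfType) n (F : 'I_n -> R) j :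
  (forall i, 0 <= F i) -> F j <= \sum_(i < n) F i.
Proof. by move=> h; rewrite (bigD1 j) //= lerDl sumr_ge0. Qed.

Lemma cn_ge0 {R : rcfType} (z : R[i]) : 0 <= cnorm2 z.
Proof. by rewrite /cnorm2 addr_ge0 ?sqr_ge0. Qed.

Lemma pt_bound (R : rcfType) (a e : R[i]) (eps : R) :
  0 <= eps -> cnorm2 a <= 1 -> cnorm2 e <= eps ^+ 2 ->
  `|cnorm2 a - cnorm2 (a + e)| <= eps ^+ 2 + 2 * eps.
Proof.
move=> he ha hee; rewrite cn_add.
have q0 := cn_ge0 e.
move: ha hee q0; rewrite /cnorm2.
set a1 := complex.Re a; set a2 := complex.Im a; set e1 := complex.Re e; set e2 := complex.Im e.
move=> ha hee q0.
set p := a1 * e1 + a2 * e2.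
have hp2 : p ^+ 2 <= eps ^+ 2.
  have : p ^+ 2 <= (a1 ^+ 2 + a2 ^+ 2) * (e1 ^+ 2 + e2 ^+ 2).
    have -> : (a1 ^+ 2 + a2 ^+ 2) * (e1 ^+ 2 + e2 ^+ 2) = p ^+ 2 + (a1 * e2 - a2 * e1) ^+ 2.
      by rewrite /p; ring.
    by rewrite lerDl sqr_ge0.
  move=> h; apply: le_trans h _.
  have h1 : 0 <= e1 ^+ 2 + e2 ^+ 2 by [].
  nra.
have hp : `|p| <= eps.
  by rewrite ler_norml; apply/andP; split; nra.
move: hp; rewrite ler_norml => /andP [hp1 hp2'].
rewrite ler_norml; apply/andP; split; lra.
Qed.

Lemma stateB (R : rcfType) (D K : nat) (U : 'M[R[i]]_(2 ^ (D + K))) (a b : 'cV[R]_(2 ^ D)) :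
  state U (a - b) = state U a - state U b.
Proof. by rewrite /state tensB mulmxBr. Qed.

Lemma state_norm (R : rcfType) (D K : nat) (U : 'M[R[i]]_(2 ^ (D + K))) (a : 'cV[R]_(2 ^ D)) :
  unitary U -> \sum_(j < 2 ^ (D + K)) cnorm2 (state U a j 0) = vnorm a ^+ 2.
Proof.
move=> hU; rewrite /state isom // tens_norm /vnorm sqr_sqrtr //.
by apply: sumr_ge0 => i _; apply: sqr_ge0.
Qed.

Theorem lemma2 (R : rcfType) (D K k : nat) (U : 'M[R[i]]_(2 ^ (D + K)))
  (x y : 'cV[R]_(2 ^ D)) (eps : R) :
  (1 <= k)%N -> (k <= 2 ^ K)%N ->
  unitary U ->
  vnorm x = 1 -> vnorm y = 1 -> vnorm (x - y) <= eps ->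
  forall c : nat, (c < k)%N ->
  `|Pclass U y c - Pclass U x c| <= (2 ^ D)%:R * (eps ^+ 2 + 2 * eps).
Proof.
move=> _ _ hU hx hy he c _.
have eps0 : 0 <= eps by apply: le_trans he; rewrite /vnorm sqrtr_ge0.
have sx : forall j, state U x j 0 = state U y j 0 + state U (x - y) j 0.
  move=> j; rewrite stateB; move: (state U x) (state U y) => A Bm; by rewrite !mxE addrCA subrr addr0.
have hA : forall j, cnorm2 (state U y j 0) <= 1.
  move=> j; rewrite -(expr1n R 2) -hy -(@state_norm R D K U y hU).
  by apply: le_sum1 => i; apply: cn_ge0.
have hE : forall j, cnorm2 (state U (x - y) j 0) <= eps ^+ 2.
  move=> j; apply: (@le_trans _ _ (vnorm (x - y) ^+ 2)).
    rewrite -(@state_norm R D K U (x - y) hU); by apply: le_sum1 => i; apply: cn_ge0.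
  by rewrite ler_pXn2r ?nnegrE // /vnorm sqrtr_ge0.
have B : forall j, `|cnorm2 (state U y j 0) - cnorm2 (state U x j 0)| <= eps ^+ 2 + 2 * eps.
  by move=> j; rewrite sx; apply: pt_bound.
rewrite /Pclass -sumrB.
apply: (le_trans (ler_norm_sum _ _ _)).
have -> : (2 ^ D)%:R * (eps ^+ 2 + 2 * eps) = \sum_(t < 2 ^ D) (eps ^+ 2 + 2 * eps) by rewrite sumr_const card_ord mulr_natl.
rewrite ler_sum // => t _.
rewrite -sumrB big_mkcond /= sum_uniq; last first.
  by move=> i j /eqP hi /eqP hj; apply: val_inj; rewrite /= hi hj.
case: pickP => [j _ | _]; first exact: B.
by rewrite normr0 addr_ge0 ?sqr_ge0 ?mulr_ge0.
Qed.
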